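(* Let a nondegenerate triangle with circumcenter $O$ and circumradius $R$ be circumscribed about a central conic with foci $F_+,F_-$, and let $d_\pm=|OF_\pm|$. If $R^2=d_+d_-$, then the conic is a hyperbola.
   Context: A central conic is a non-degenerate ellipse or hyperbola. A triangle is circumscribed about a conic if each of its three sidelines is tangent to the conic. *)

(* Defs.v *)
From mathcomp Require Import all_boot all_order all_algebra.
From mathcomp Require Import reals.
Set Implicit Arguments. Unset Strict Implicit. Unset Printing Implicit Defensive.
Import Order.TTheory GRing.Theory Num.Theory.
Local Open Scope ring_scope.

Section Plane.
Variable R : realType.
Definition pt := (R * R)%type.

Definition padd (p q : pt) : pt := (p.1 + q.1, p.2 + q.2).
Definition psub (p q : pt) : pt := (p.1 - q.1, p.2 - q.2).
Definition pscale (t : R) (p : pt) : pt := (t * p.1, t * p.2).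
Definition dot (u v : pt) : R := u.1 * v.1 + u.2 * v.2.
Definition cross (u v : pt) : R := u.1 * v.2 - u.2 * v.1.
Definition dist (p q : pt) : R := Num.sqrt (dot (psub p q) (psub p q)).

(* Central conic with foci F1, F2 and semi-major (resp. semi-transverse)
   axis a: the ellipse  |XF1| + |XF2| = 2a  if 2a > |F1F2| (a circle when
   F1 = F2), the hyperbola  | |XF1| - |XF2| | = 2a  if 0 < 2a < |F1F2|. *)
Definition central_conic (F1 F2 : pt) (a : R) : Prop :=
  0 < a /\ 2 * a != dist F1 F2.

Definition is_ellipse (F1 F2 : pt) (a : R) : Prop :=
  central_conic F1 F2 a /\ dist F1 F2 < 2 * a.

Definition is_hyperbola (F1 F2 : pt) (a : R) : Prop :=
  central_conic F1 F2 a /\ 2 * a < dist F1 F2.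

(* The quadratic equation of that conic: with center M = (F1+F2)/2,
   e = (F1-F2)/2 and u = X - M, the focal locus is
     a^2 |u|^2 - (u.e)^2 - a^2 (a^2 - |e|^2) = 0,
   valid for both the ellipse and the hyperbola (both branches). *)
Definition conic_eq (F1 F2 : pt) (a : R) (X : pt) : R :=
  let M := pscale (1 / 2) (padd F1 F2) in
  let e := pscale (1 / 2) (psub F1 F2) in
  let u := psub X M in
  a ^+ 2 * dot u u - (dot u e) ^+ 2 - a ^+ 2 * (a ^+ 2 - dot e e).

(* The line {P + t V | t} (V <> 0) is tangent to the conic: the conic
   equation restricted to the line is a genuine quadratic in t with a
   double root t0 (the point of tangency P + t0 V). *)
Definition tangent_line (F1 F2 : pt) (a : R) (P V : pt) : Prop :=
  V != (0, 0) /\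
  exists t0 k : R, k != 0 /\
    forall t : R, conic_eq F1 F2 a (padd P (pscale t V)) = k * (t - t0) ^+ 2.

Definition sideline_tangent (F1 F2 : pt) (a : R) (A B : pt) : Prop :=
  tangent_line F1 F2 a A (psub B A).

Definition nondegenerate_triangle (A B C : pt) : Prop :=
  cross (psub B A) (psub C A) != 0.

Definition circumscribed (A B C F1 F2 : pt) (a : R) : Prop :=
  [/\ sideline_tangent F1 F2 a A B, sideline_tangent F1 F2 a B C
    & sideline_tangent F1 F2 a C A].

Definition is_circumcenter (A B C O : pt) : Prop :=
  dist O A = dist O B /\ dist O B = dist O C.

End Plane.

(* Main.v *)
Require Import Defs.
From mathcomp Require Import all_boot all_order all_algebra.
From mathcomp Require Import reals.
From mathcomp Require Import ring lra.
Import Order.TTheory GRing.Theory Num.Theory.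
Local Open Scope ring_scope.

Lemma combine {R : realType} (z x y : R) : x - y = z -> z = 0 -> x = y.
Proof. by move=> h hz; apply/eqP; rewrite -subr_eq0 h hz. Qed.

Lemma lin_uniq {R : realType} (p q r s x y : R) : p*s - q*r != 0 ->
  p*x + q*y = 0 -> r*x + s*y = 0 -> x = 0 /\ y = 0.
Proof.
move=> hd h1 h2.
have hx : x * (p*s - q*r) = 0.
  by apply: (combine (s * (p*x+q*y) - q * (r*x+s*y))); [ring | rewrite h1 h2; ring].
have hy : y * (p*s - q*r) = 0.
  by apply: (combine (p * (r*x+s*y) - r * (p*x+q*y))); [ring | rewrite h1 h2; ring].
move/eqP: hx; move/eqP: hy; rewrite !mulf_eq0 (negbTE hd) !orbF => /eqP -> /eqP -> //.
Qed.

Definition P1 {R : realType} (a B t : R) := a*(a^+2 - B*t^+2)/(a^+2 + B*t^+2).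
Definition P2 {R : realType} (a B t : R) := 2*a*B*t/(a^+2 + B*t^+2).
Definition ell {R : realType} (a B : R) (T : R*R) := B*T.1^+2 + a^+2*T.2^+2 = a^+2*B.
Definition pol {R : realType} (a B : R) (T X : R*R) := B*T.1*X.1 + a^+2*T.2*X.2 = a^+2*B.
Definition detT {R : realType} (T T' : R*R) := T.1*T'.2 - T.2*T'.1.

Lemma param_of {R : realType} {a B : R} {T : R*R} : 0 < a -> 0 < B -> ell a B T ->
  T.1 + a != 0 -> let t := a^+2*T.2/(B*(T.1+a)) in T.1 = P1 a B t /\ T.2 = P2 a B t.
Proof.
move=> a0 B0 hT ha t.
have an : a != 0 by rewrite gt_eqF.
have Bn : B != 0 by rewrite gt_eqF.
have hs : B * t^+2 = a^+2 * (a - T.1) / (T.1 + a).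
  apply: (combine (a^+2 * (B*T.1^+2 + a^+2*T.2^+2 - a^+2*B) / (B * (T.1+a)^+2))).
    rewrite /t; field; by rewrite Bn ha.
  by rewrite hT subrr mulr0 mul0r.
have h2 : a^+2 + B*t^+2 = 2 * a^+3 / (T.1 + a).
  by rewrite hs; field.
rewrite /P1 /P2 h2 hs; split; first by field; rewrite an ha.
rewrite /t; field; by rewrite an ha Bn.
Qed.
Definition X1 {R : realType} (a B u v : R) := a*(a^+2 - B*u*v)/(a^+2 + B*u*v).
Definition X2 {R : realType} (a B u v : R) := a*B*(u+v)/(a^+2 + B*u*v).

Lemma pos_den {R : realType} (a B t : R) : 0 < a -> 0 < B -> a^+2 + B*t^+2 != 0.
Proof. move=> a0 B0; rewrite gt_eqF //; have := sqr_ge0 t; nra. Qed.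

Lemma vertex {R : realType} {a B u v : R} {V : R*R} : 0 < a -> 0 < B ->
  detT (P1 a B u, P2 a B u) (P1 a B v, P2 a B v) != 0 ->
  pol a B (P1 a B u, P2 a B u) V -> pol a B (P1 a B v, P2 a B v) V ->
  [/\ V.1 = X1 a B u v, V.2 = X2 a B u v & a^+2 + B*u*v != 0].
Proof.
move=> a0 B0 hd hu hv.
have an : a != 0 by rewrite gt_eqF.
have Bn : B != 0 by rewrite gt_eqF.
have du := pos_den _ _ u a0 B0. have dv := pos_den _ _ v a0 B0.
have hdet : detT (P1 a B u, P2 a B u) (P1 a B v, P2 a B v) =
   2*a^+2*B*(v-u)*(a^+2 + B*u*v) / ((a^+2 + B*u^+2)*(a^+2+B*v^+2)).
  by rewrite /detT /P1 /P2 /=; field; rewrite du dv.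
have huv : a^+2 + B*u*v != 0.
  by apply: contra hd; rewrite hdet => /eqP ->; rewrite mulr0 mul0r.
have xu : pol a B (P1 a B u, P2 a B u) (X1 a B u v, X2 a B u v).
  by rewrite /pol /P1 /P2 /X1 /X2 /=; field; rewrite du huv.
have xv : pol a B (P1 a B v, P2 a B v) (X1 a B u v, X2 a B u v).
  by rewrite /pol /P1 /P2 /X1 /X2 /=; field; rewrite dv huv.
move: hu hv xu xv; rewrite /pol /= => hu hv xu xv.
have [h1 h2] : V.1 - X1 a B u v = 0 /\ V.2 - X2 a B u v = 0.
  apply: (@lin_uniq _ (B * P1 a B u) (a^+2 * P2 a B u) (B * P1 a B v) (a^+2 * P2 a B v)).
  - have -> : B * P1 a B u * (a ^+ 2 * P2 a B v) - a ^+ 2 * P2 a B u * (B * P1 a B v)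
        = B * a^+2 * detT (P1 a B u, P2 a B u) (P1 a B v, P2 a B v) by rewrite /detT /=; ring.
    by rewrite !mulf_neq0 // expf_neq0.
  - by apply: (combine ((B * P1 a B u * V.1 + a ^+ 2 * P2 a B u * V.2 - a^+2 * B) -
      (B * P1 a B u * X1 a B u v + a ^+ 2 * P2 a B u * X2 a B u v - a^+2*B))); [ring| rewrite hu xu; ring].
  - by apply: (combine ((B * P1 a B v * V.1 + a ^+ 2 * P2 a B v * V.2 - a^+2 * B) -
      (B * P1 a B v * X1 a B u v + a ^+ 2 * P2 a B v * X2 a B u v - a^+2*B))); [ring| rewrite hv xv; ring].
split => //; apply/eqP; by rewrite -subr_eq0 ?h1 ?h2.
Qed.

Definition crs {R : realType} (A B C : R*R) := (B.1-A.1)*(C.2-A.2) - (B.2-A.2)*(C.1-A.1).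
Definition d2 {R : realType} (X Y : R*R) := (X.1-Y.1)^+2 + (X.2-Y.2)^+2.
Definition cc1 {R : realType} (A B C : R*R) :=
 ((A.1^+2 + A.2^+2) * (B.2 - C.2) + (B.1^+2+B.2^+2) * (C.2 - A.2) + (C.1^+2+C.2^+2)*(A.2-B.2)) / (2 * crs A B C).
Definition cc2 {R : realType} (A B C : R*R) :=
 ((A.1^+2 + A.2^+2) * (C.1 - B.1) + (B.1^+2+B.2^+2) * (A.1 - C.1) + (C.1^+2+C.2^+2)*(B.1-A.1)) / (2 * crs A B C).

Lemma circ {R : realType} {A B C O : R*R} : crs A B C != 0 ->
  d2 O A = d2 O B -> d2 O B = d2 O C -> O.1 = cc1 A B C /\ O.2 = cc2 A B C.
Proof.
move=> hc h1 h2.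
have [e1 e2] : O.1 - cc1 A B C = 0 /\ O.2 - cc2 A B C = 0.
  apply: (@lin_uniq _ (B.1-A.1) (B.2-A.2) (C.1-A.1) (C.2-A.2)); first by [].
  - apply: (combine ((d2 O A - d2 O B)/2)); last by rewrite h1 subrr mul0r.
    rewrite /cc1 /cc2 /d2; rewrite /crs in hc *; field. by rewrite hc.
  - apply: (combine ((d2 O A - d2 O C)/2)); last by rewrite h1 h2 subrr mul0r.
    rewrite /cc1 /cc2 /d2; rewrite /crs in hc *; field. by rewrite hc.
by split; apply/eqP; rewrite -subr_eq0 ?e1 ?e2.
Qed.

Definition ident {R : realType} (a B : R) (O A : R*R) :=
  (d2 O A - (O.1^+2+O.2^+2) - (a^+2-B))^+2 - 4*O.1^+2*(a^+2-B) = 4*d2 O A*B.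

Definition r1E {R : realType} (a B t1 t2 t3 : R) := - 4*a^+8 + a^+6*B - a^+4*B^+2*t1^+2 - a^+4*B^+2*t2^+2 - a^+4*B^+2*t3^+2 + 4*a^+2*B^+3*t1^+2*t2^+2*t3^+2 + a^+2*B^+3*t1^+2*t2^+2 + a^+2*B^+3*t1^+2*t3^+2 + a^+2*B^+3*t2^+2*t3^+2 - B^+4*t1^+2*t2^+2*t3^+2.
Definition r2E {R : realType} (a B t1 t2 t3 : R) := 8*a^+4*t1*t2*t3 - 2*a^+4*t1 - 2*a^+4*t2 - 2*a^+4*t3 - 2*a^+2*B*t1^+2*t2 - 2*a^+2*B*t1^+2*t3 - 2*a^+2*B*t1*t2^+2 - 8*a^+2*B*t1*t2*t3 - 2*a^+2*B*t1*t3^+2 - 2*a^+2*B*t2^+2*t3 - 2*a^+2*B*t2*t3^+2 - 2*B^+2*t1^+2*t2^+2*t3 - 2*B^+2*t1^+2*t2*t3^+2 - 2*B^+2*t1*t2^+2*t3^+2.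
Definition sE {R : realType} (a B t1 t2 t3 : R) := 2*a^+8 - 2*a^+6*B*t1*t2 - 2*a^+6*B*t1*t3 - 2*a^+6*B*t2*t3 - a^+6*B - 2*a^+4*B^+2*t1^+2*t2*t3 + a^+4*B^+2*t1^+2 - 2*a^+4*B^+2*t1*t2^+2*t3 - 2*a^+4*B^+2*t1*t2*t3^+2 + 2*a^+4*B^+2*t1*t2 + 2*a^+4*B^+2*t1*t3 + a^+4*B^+2*t2^+2 + 2*a^+4*B^+2*t2*t3 + a^+4*B^+2*t3^+2 + 2*a^+2*B^+3*t1^+2*t2^+2*t3^+2 + a^+2*B^+3*t1^+2*t2^+2 + 2*a^+2*B^+3*t1^+2*t2*t3 + a^+2*B^+3*t1^+2*t3^+2 + 2*a^+2*B^+3*t1*t2^+2*t3 + 2*a^+2*B^+3*t1*t2*t3^+2 + a^+2*B^+3*t2^+2*t3^+2 - B^+4*t1^+2*t2^+2*t3^+2.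
Definition DeltaE {R : realType} (a B t1 t2 t3 : R) := (a^+2 + B*t1*t2)*(a^+2 + B*t2*t3)*(a^+2 + B*t3*t1).
Definition oS1 {R : realType} (a B t1 t2 t3 : R) := - r1E a B t1 t2 t3 / (4*a*DeltaE a B t1 t2 t3).
Definition oS2 {R : realType} (a B t1 t2 t3 : R) := - (a*B*r2E a B t1 t2 t3) / (4*DeltaE a B t1 t2 t3).
Definition kS {R : realType} (a B t1 t2 t3 : R) := sE a B t1 t2 t3 / (2*DeltaE a B t1 t2 t3).

Lemma cyc_inv {R : realType} (a B t1 t2 t3 : R) :
  [/\ oS1 a B t2 t3 t1 = oS1 a B t1 t2 t3, oS2 a B t2 t3 t1 = oS2 a B t1 t2 t3
    & kS a B t2 t3 t1 = kS a B t1 t2 t3].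
Proof.
split; rewrite /oS1 /oS2 /kS /r1E /r2E /sE /DeltaE; congr (_ / _); ring.
Qed.

Lemma on_circ {R : realType} {a B t1 t2 t3 : R} : a != 0 ->
  a^+2 + B*t1*t2 != 0 -> a^+2 + B*t2*t3 != 0 -> a^+2 + B*t3*t1 != 0 ->
  (X1 a B t1 t2)^+2 + (X2 a B t1 t2)^+2
  - 2*(oS1 a B t1 t2 t3 * X1 a B t1 t2 + oS2 a B t1 t2 t3 * X2 a B t1 t2) + kS a B t1 t2 t3 = 0.
Proof.
move=> an h12 h23 h31.
rewrite /oS1 /oS2 /kS /r1E /r2E /sE /DeltaE /X1 /X2.
by field; rewrite an h12 h23 h31.
Qed.

Lemma final2 {R : realType} {a B t1 t2 t3 : R} : a != 0 ->
  a^+2 + B*t1*t2 != 0 -> a^+2 + B*t2*t3 != 0 -> a^+2 + B*t3*t1 != 0 ->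
  let o1 := oS1 a B t1 t2 t3 in let o2 := oS2 a B t1 t2 t3 in let k := kS a B t1 t2 t3 in
  (k + a^+2 - B)^+2 - 4*o1^+2*(a^+2 - B) = 4*(o1^+2+o2^+2 - k)*B.
Proof.
move=> an h12 h23 h31 o1 o2 k.
rewrite /o1 /o2 /k /oS1 /oS2 /kS /r1E /r2E /sE /DeltaE.
by field; rewrite an h12 h23 h31.
Qed.

Lemma circ_id {R : realType} {A B C O : R*R} (o1 o2 k : R) : crs A B C != 0 ->
  d2 O A = d2 O B -> d2 O B = d2 O C ->
  A.1^+2 + A.2^+2 - 2*(o1*A.1 + o2*A.2) + k = 0 ->
  B.1^+2 + B.2^+2 - 2*(o1*B.1 + o2*B.2) + k = 0 ->
  C.1^+2 + C.2^+2 - 2*(o1*C.1 + o2*C.2) + k = 0 ->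
  O.1 = o1 /\ O.2 = o2.
Proof.
move=> hc h1 h2 cA cB cC.
have [e1 e2] : O.1 - o1 = 0 /\ O.2 - o2 = 0.
  apply: (@lin_uniq _ (B.1-A.1) (B.2-A.2) (C.1-A.1) (C.2-A.2)); first by [].
  - apply: (combine (((d2 O A - d2 O B) + ((B.1^+2 + B.2^+2 - 2*(o1*B.1 + o2*B.2) + k)
       - (A.1^+2 + A.2^+2 - 2*(o1*A.1 + o2*A.2) + k)))/2)); first by rewrite /d2; field.
    by rewrite h1 cA cB subrr; field.
  - apply: (combine (((d2 O A - d2 O C) + ((C.1^+2 + C.2^+2 - 2*(o1*C.1 + o2*C.2) + k)
       - (A.1^+2 + A.2^+2 - 2*(o1*A.1 + o2*A.2) + k)))/2)); first by rewrite /d2; field.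
    by rewrite h1 h2 cA cC subrr; field.
by split; apply/eqP; rewrite -subr_eq0 ?e1 ?e2.
Qed.

Lemma noncoll {R : realType} {a B : R} {T T' A Bv C : R*R} : 0 < a -> 0 < B ->
  pol a B T A -> pol a B T Bv -> pol a B T' A -> pol a B T' C ->
  detT T T' = 0 -> crs A Bv C = 0.
Proof.
move=> a0 B0; rewrite /pol => hA hB hA' hC' hd.
have an : a != 0 by rewrite gt_eqF.
have Bn : B != 0 by rewrite gt_eqF.
have K0 : a^+2 * B != 0 by rewrite mulf_neq0 // expf_neq0.
have EA : B*T.1*A.1 + a^+2*T.2*A.2 - a^+2*B = 0 by rewrite hA subrr.
have EB : B*T.1*Bv.1 + a^+2*T.2*Bv.2 - a^+2*B = 0 by rewrite hB subrr.
have EA' : B*T'.1*A.1 + a^+2*T'.2*A.2 - a^+2*B = 0 by rewrite hA' subrr.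
have EC' : B*T'.1*C.1 + a^+2*T'.2*C.2 - a^+2*B = 0 by rewrite hC' subrr.
have e1 : (T'.1 - T.1)*(B*(a^+2*B)) = 0.
  apply: (combine (- A.2*a^+2*B*detT T T' - B*T'.1*(B*T.1*A.1 + a^+2*T.2*A.2 - a^+2*B)
     + B*T.1*(B*T'.1*A.1 + a^+2*T'.2*A.2 - a^+2*B))); first by rewrite /detT; ring.
  by rewrite hd EA EA'; ring.
have e2 : (T'.2 - T.2)*(a^+2*(a^+2*B)) = 0.
  apply: (combine (A.1*a^+2*B*detT T T' - a^+2*T'.2*(B*T.1*A.1 + a^+2*T.2*A.2 - a^+2*B)
     + a^+2*T.2*(B*T'.1*A.1 + a^+2*T'.2*A.2 - a^+2*B))); first by rewrite /detT; ring.
  by rewrite hd EA EA'; ring.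
have K1 : B*(a^+2*B) != 0 by rewrite mulf_neq0.
have K2 : a^+2*(a^+2*B) != 0 by rewrite mulf_neq0 // expf_neq0.
move/eqP: e1; rewrite mulf_eq0 (negbTE K1) orbF subr_eq0 => /eqP h1.
move/eqP: e2; rewrite mulf_eq0 (negbTE K2) orbF subr_eq0 => /eqP h2.
move: EC'; rewrite h1 h2 => EC.
have c1 : B*T.1 * crs A Bv C = 0.
  apply: (combine ((B*T.1*Bv.1 + a^+2*T.2*Bv.2 - a^+2*B - (B*T.1*A.1 + a^+2*T.2*A.2 - a^+2*B))*(C.2-A.2)
    - (B*T.1*C.1 + a^+2*T.2*C.2 - a^+2*B - (B*T.1*A.1 + a^+2*T.2*A.2 - a^+2*B))*(Bv.2-A.2)));
    first by rewrite /crs; ring.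
  by rewrite EA EB EC; ring.
have c2 : a^+2*T.2 * crs A Bv C = 0.
  apply: (combine ((Bv.1-A.1)*(B*T.1*C.1 + a^+2*T.2*C.2 - a^+2*B - (B*T.1*A.1 + a^+2*T.2*A.2 - a^+2*B))
    - (C.1-A.1)*(B*T.1*Bv.1 + a^+2*T.2*Bv.2 - a^+2*B - (B*T.1*A.1 + a^+2*T.2*A.2 - a^+2*B))));
    first by rewrite /crs; ring.
  by rewrite EA EB EC; ring.
case: (eqVneq (crs A Bv C) 0) => // hc.
move/eqP: c1; rewrite mulf_eq0 (negbTE hc) orbF => /eqP c1.
move/eqP: c2; rewrite mulf_eq0 (negbTE hc) orbF => /eqP c2.
by move: K0; rewrite -hA c1 c2 !mul0r addr0 eqxx.
Qed.

Lemma pair_eta {R : realType} {T : R*R} {x y : R} : T.1 = x -> T.2 = y -> T = (x, y).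
Proof. by case: T => /= ? ? -> ->. Qed.

Lemma dets {R : realType} {a B : R} {T1 T2 T3 A Bv C : R*R} : 0 < a -> 0 < B ->
  pol a B T1 A -> pol a B T1 Bv -> pol a B T2 Bv -> pol a B T2 C ->
  pol a B T3 C -> pol a B T3 A -> crs A Bv C != 0 ->
  [/\ detT T1 T2 != 0, detT T2 T3 != 0 & detT T3 T1 != 0].
Proof.
move=> a0 B0 h1A h1B h2B h2C h3C h3A hc.
have c1 : crs Bv A C = - crs A Bv C by rewrite /crs; ring.
have c2 : crs C Bv A = - crs A Bv C by rewrite /crs; ring.
have c3 : crs A C Bv = - crs A Bv C by rewrite /crs; ring.
split; apply/eqP => hd.
- by move: hc; rewrite -[crs A Bv C]opprK -c1 (noncoll a0 B0 h1B h1A h2B h2C hd) oppr0 eqxx.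
- by move: hc; rewrite -[crs A Bv C]opprK -c2 (noncoll a0 B0 h2C h2B h3C h3A hd) oppr0 eqxx.
- by move: hc; rewrite -[crs A Bv C]opprK -c3 (noncoll a0 B0 h3A h3C h1A h1B hd) oppr0 eqxx.
Qed.

Lemma coreT {R : realType} {a B : R} {T1 T2 T3 A Bv C O : R*R} : 0 < a -> 0 < B ->
  ell a B T1 -> ell a B T2 -> ell a B T3 ->
  pol a B T1 A -> pol a B T1 Bv -> pol a B T2 Bv -> pol a B T2 C ->
  pol a B T3 C -> pol a B T3 A -> crs A Bv C != 0 ->
  d2 O A = d2 O Bv -> d2 O Bv = d2 O C ->
  T1.1 + a != 0 -> T2.1 + a != 0 -> T3.1 + a != 0 -> ident a B O A.
Proof.
move=> a0 B0 e1 e2 e3 h1A h1B h2B h2C h3C h3A hc o1 o2 n1 n2 n3.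
have [d12 d23 d31] := dets a0 B0 h1A h1B h2B h2C h3C h3A hc.
have [p11 p12] := param_of a0 B0 e1 n1.
have [p21 p22] := param_of a0 B0 e2 n2.
have [p31 p32] := param_of a0 B0 e3 n3.
set t1 := a^+2 * T1.2 / (B * (T1.1 + a)) in p11 p12.
set t2 := a^+2 * T2.2 / (B * (T2.1 + a)) in p21 p22.
set t3 := a^+2 * T3.2 / (B * (T3.1 + a)) in p31 p32.
have E1 := pair_eta p11 p12. have E2 := pair_eta p21 p22. have E3 := pair_eta p31 p32.
clearbody t1 t2 t3.
rewrite E1 E2 E3 in d12 d23 d31 h1A h1B h2B h2C h3C h3A.
have [vB1 vB2 g12] := vertex a0 B0 d12 h1B h2B.
have [vC1 vC2 g23] := vertex a0 B0 d23 h2C h3C.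
have [vA1 vA2 g31] := vertex a0 B0 d31 h3A h1A.
have EA := pair_eta vA1 vA2. have EB := pair_eta vB1 vB2. have EC := pair_eta vC1 vC2.
have an : a != 0 by rewrite gt_eqF.
have [s1 s2 s3] := cyc_inv a B t1 t2 t3.
have [s1' s2' s3'] := cyc_inv a B t2 t3 t1.
have cB := on_circ an g12 g23 g31.
have cC := on_circ an g23 g31 g12.
have cA := on_circ an g31 g12 g23.
rewrite s1 s2 s3 in cC.
rewrite s1' s2' s3' s1 s2 s3 in cA.
rewrite -vA1 -vA2 in cA; rewrite -vB1 -vB2 in cB; rewrite -vC1 -vC2 in cC.
have [q1 q2] := circ_id _ _ _ hc o1 o2 cA cB cC.
have hR : d2 O A = (oS1 a B t1 t2 t3)^+2 + (oS2 a B t1 t2 t3)^+2 - kS a B t1 t2 t3.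
  apply: (combine ((O.1 - oS1 a B t1 t2 t3)*(O.1 + oS1 a B t1 t2 t3 - 2*A.1) + (O.2 - oS2 a B t1 t2 t3)*(O.2 + oS2 a B t1 t2 t3 - 2*A.2)
    + (A.1 ^+ 2 + A.2 ^+ 2 - 2 * (oS1 a B t1 t2 t3 * A.1 + oS2 a B t1 t2 t3 * A.2) + kS a B t1 t2 t3))); first by rewrite /d2; ring.
  by rewrite q1 q2 cA; ring.
rewrite /ident hR q1 q2.
have := final2 an g12 g23 g31 => /= <-; ring.
Qed.

Definition refl {R : realType} (X : R*R) : R*R := (- X.1, X.2).

Lemma ell_refl {R : realType} {a B : R} {T : R*R} : ell a B T -> ell a B (refl T).
Proof. by rewrite /ell /refl /= sqrrN. Qed.

Lemma pol_refl {R : realType} {a B : R} {T X : R*R} : pol a B T X -> pol a B (refl T) (refl X).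
Proof. by rewrite /pol /refl /= => <-; ring. Qed.

Lemma ell_side {R : realType} {a B : R} {T : R*R} : 0 < a -> 0 < B -> ell a B T ->
  T.1 ^+ 2 = a ^+ 2 -> T.2 = 0.
Proof.
rewrite /ell => a0 B0 h e.
have : a^+2 * T.2^+2 = 0 by apply: (combine (B*T.1^+2 + a^+2*T.2^+2 - a^+2*B - B*(T.1^+2 - a^+2)));
  [ring | rewrite h e; ring].
by move/eqP; rewrite mulf_eq0 !expf_eq0 /= (gt_eqF a0) /= => /eqP.
Qed.

Lemma opp_ok {R : realType} {a B : R} {Ti Tj : R*R} : 0 < a -> 0 < B -> ell a B Ti -> ell a B Tj ->
  detT Ti Tj != 0 -> Tj.1 = a -> Ti.1 + a != 0.
Proof.
move=> a0 B0 ei ej hd ha; apply/eqP => hi.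
have hi' : Ti.1 = - a by apply/eqP; rewrite -subr_eq0 opprK hi.
have q1 : Ti.1 ^+ 2 = a ^+ 2 by rewrite hi' sqrrN.
have q2 : Tj.1 ^+ 2 = a ^+ 2 by rewrite ha.
have z1 := ell_side a0 B0 ei q1.
have z2 := ell_side a0 B0 ej q2.
by move: hd; rewrite /detT z1 z2 mulr0 mul0r subrr eqxx.
Qed.

Lemma detT_sym {R : realType} (T T' : R*R) : detT T T' = - detT T' T.
Proof. rewrite /detT; ring. Qed.

Lemma coreT_gen {R : realType} {a B : R} {T1 T2 T3 A Bv C O : R*R} : 0 < a -> 0 < B ->
  ell a B T1 -> ell a B T2 -> ell a B T3 ->
  pol a B T1 A -> pol a B T1 Bv -> pol a B T2 Bv -> pol a B T2 C ->
  pol a B T3 C -> pol a B T3 A -> crs A Bv C != 0 ->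
  d2 O A = d2 O Bv -> d2 O Bv = d2 O C -> ident a B O A.
Proof.
move=> a0 B0 e1 e2 e3 h1A h1B h2B h2C h3C h3A hc o1 o2.
have [d12 d23 d31] := dets a0 B0 h1A h1B h2B h2C h3C h3A hc.
have d21 : detT T2 T1 != 0 by rewrite detT_sym oppr_eq0.
have d32 : detT T3 T2 != 0 by rewrite detT_sym oppr_eq0.
have d13 : detT T1 T3 != 0 by rewrite detT_sym oppr_eq0.
case: (boolP [&& T1.1 + a != 0, T2.1 + a != 0 & T3.1 + a != 0]) => [/and3P [n1 n2 n3] | nok].
  exact: (coreT a0 B0 e1 e2 e3 h1A h1B h2B h2C h3C h3A hc o1 o2 n1 n2 n3).
have self (T : R*R) : T.1 = a -> T.1 + a != 0 by move=> ->; rewrite gt_eqF // addr_gt0.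
have r1 : (refl T1).1 + a != 0.
  rewrite /refl /=; apply/eqP => h; have ha : T1.1 = a by apply/eqP; rewrite -subr_eq0 -oppr_eq0 opprB addrC h.
  by move/negP: nok; apply; apply/and3P; split; [exact: self | exact: (opp_ok a0 B0 e2 e1) | exact: (opp_ok a0 B0 e3 e1)].
have r2 : (refl T2).1 + a != 0.
  rewrite /refl /=; apply/eqP => h; have ha : T2.1 = a by apply/eqP; rewrite -subr_eq0 -oppr_eq0 opprB addrC h.
  by move/negP: nok; apply; apply/and3P; split; [exact: (opp_ok a0 B0 e1 e2) | exact: self | exact: (opp_ok a0 B0 e3 e2)].
have r3 : (refl T3).1 + a != 0.
  rewrite /refl /=; apply/eqP => h; have ha : T3.1 = a by apply/eqP; rewrite -subr_eq0 -oppr_eq0 opprB addrC h.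
  by move/negP: nok; apply; apply/and3P; split; [exact: (opp_ok a0 B0 e1 e3) | exact: (opp_ok a0 B0 e2 e3) | exact: self].
have hc' : crs (refl A) (refl Bv) (refl C) != 0.
  by rewrite (_ : crs _ _ _ = - crs A Bv C) ?oppr_eq0 // /crs /refl /=; ring.
have dr (X Y : R*R) : d2 (refl X) (refl Y) = d2 X Y by rewrite /d2 /refl /=; ring.
have o1' : d2 (refl O) (refl A) = d2 (refl O) (refl Bv) by rewrite !dr.
have o2' : d2 (refl O) (refl Bv) = d2 (refl O) (refl C) by rewrite !dr.
have := coreT a0 B0 (ell_refl e1) (ell_refl e2) (ell_refl e3) (pol_refl h1A) (pol_refl h1B)
  (pol_refl h2B) (pol_refl h2C) (pol_refl h3C) (pol_refl h3A) hc'
  o1' o2' r1 r2 r3.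
by rewrite /ident !dr /refl /= sqrrN.
Qed.

Lemma tangent_pt {R : realType} {a B : R} {P Q : R*R} (t0 k : R) :
 (forall t, B*(P.1 + t*(Q.1-P.1))^+2 + a^+2*(P.2 + t*(Q.2-P.2))^+2 - a^+2*B = k*(t-t0)^+2) ->
 exists T, [/\ ell a B T, pol a B T P & pol a B T Q].
Proof.
move=> H.
exists (P.1 + t0*(Q.1-P.1), P.2 + t0*(Q.2-P.2)); rewrite /ell /pol /=.
have E0 : B*(P.1 + t0*(Q.1-P.1))^+2 + a^+2*(P.2 + t0*(Q.2-P.2))^+2 - a^+2*B = 0.
  by rewrite H subrr; ring.
have h1 := H (t0+1). have h2 := H (t0-1).
have Ev : B*(P.1 + t0*(Q.1-P.1))*(Q.1-P.1) + a^+2*(P.2 + t0*(Q.2-P.2))*(Q.2-P.2) = 0.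
  apply: (combine ((B*(P.1 + (t0+1)*(Q.1-P.1))^+2 + a^+2*(P.2 + (t0+1)*(Q.2-P.2))^+2 - a^+2*B
     - k*(t0+1-t0)^+2 - (B*(P.1 + (t0-1)*(Q.1-P.1))^+2 + a^+2*(P.2 + (t0-1)*(Q.2-P.2))^+2 - a^+2*B
     - k*(t0-1-t0)^+2)) / 4)); first by field.
  by rewrite h1 h2; ring.
split.
- by apply/eqP; rewrite -subr_eq0 E0.
- apply: (combine ((B*(P.1 + t0*(Q.1-P.1))^+2 + a^+2*(P.2 + t0*(Q.2-P.2))^+2 - a^+2*B)
     - t0 * (B*(P.1 + t0*(Q.1-P.1))*(Q.1-P.1) + a^+2*(P.2 + t0*(Q.2-P.2))*(Q.2-P.2)))); first by ring.
  by rewrite E0 Ev; ring.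
- apply: (combine ((B*(P.1 + t0*(Q.1-P.1))^+2 + a^+2*(P.2 + t0*(Q.2-P.2))^+2 - a^+2*B)
     + (1 - t0) * (B*(P.1 + t0*(Q.1-P.1))*(Q.1-P.1) + a^+2*(P.2 + t0*(Q.2-P.2))*(Q.2-P.2)))); first by ring.
  by rewrite E0 Ev; ring.
Qed.

Definition rho {R : realType} (u X : R*R) : R*R := (u.1*X.1 + u.2*X.2, u.1*X.2 - u.2*X.1).

Lemma conic_rot {R : realType} {a c : R} {u e : R*R} (x : R*R) :
  u.1^+2 + u.2^+2 = 1 -> e.1 = c*u.1 -> e.2 = c*u.2 ->
  a^+2 * dot x x - (dot x e)^+2 - a^+2*(a^+2 - dot e e) =
  (a^+2 - c^+2)*(rho u x).1^+2 + a^+2*(rho u x).2^+2 - a^+2*(a^+2 - c^+2).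
Proof.
move=> hu h1 h2; apply: (combine ((u.1^+2+u.2^+2-1)*(a^+2*(c^+2 - (x.1^+2+x.2^+2))))).
  by rewrite /dot /rho /= h1 h2; ring.
by rewrite hu subrr mul0r.
Qed.

Lemma focdist {R : realType} {c : R} {u e : R*R} (x : R*R) :
  u.1^+2 + u.2^+2 = 1 -> e.1 = c*u.1 -> e.2 = c*u.2 ->
  dot (psub x e) (psub x e) = ((rho u x).1 - c)^+2 + (rho u x).2^+2.
Proof.
move=> hu h1 h2; apply: (combine ((u.1^+2+u.2^+2-1)*(c^+2 - (x.1^+2+x.2^+2)))).
  by rewrite /dot /rho /psub /= h1 h2; ring.
by rewrite hu subrr mul0r.
Qed.

Lemma conic_eqE {R : realType} (F1 F2 : pt R) (a : R) (X : pt R) :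
  conic_eq F1 F2 a X = a^+2 * dot (psub X (pscale (1/2) (padd F1 F2))) (psub X (pscale (1/2) (padd F1 F2)))
   - (dot (psub X (pscale (1/2) (padd F1 F2))) (pscale (1/2) (psub F1 F2)))^+2
   - a^+2 * (a^+2 - dot (pscale (1/2) (psub F1 F2)) (pscale (1/2) (psub F1 F2))).
Proof. by []. Qed.

Lemma tang_rot {R : realType} {a c : R} {u F1 F2 P Q : pt R} :
  u.1^+2 + u.2^+2 = 1 -> (pscale (1/2) (psub F1 F2)).1 = c*u.1 ->
  (pscale (1/2) (psub F1 F2)).2 = c*u.2 ->
  tangent_line F1 F2 a P (psub Q P) ->
  exists T, [/\ ell a (a^+2-c^+2) T, pol a (a^+2-c^+2) T (rho u (psub P (pscale (1/2) (padd F1 F2))))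
      & pol a (a^+2-c^+2) T (rho u (psub Q (pscale (1/2) (padd F1 F2))))].
Proof.
move=> hu h1 h2 [_ [t0 [k [_ H]]]].
apply: (tangent_pt t0 k) => t.
rewrite -(H t) conic_eqE (conic_rot _ hu h1 h2).
rewrite /rho /psub /padd /pscale /=; ring.
Qed.

Lemma dot_ge0 {R : realType} (x : pt R) : 0 <= dot x x.
Proof. by rewrite /dot -!expr2 addr_ge0 ?sqr_ge0. Qed.

Lemma dist_sq {R : realType} (x y : pt R) : dist x y ^+ 2 = dot (psub x y) (psub x y).
Proof. by rewrite /dist sqr_sqrtr // dot_ge0. Qed.

Lemma d2_eq0 {R : realType} {X Y : R*R} : d2 X Y = 0 -> X = Y.
Proof.
rewrite /d2 => /eqP; rewrite paddr_eq0 ?sqr_ge0 // !sqrf_eq0 !subr_eq0 => /andP [/eqP h1 /eqP h2].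
by case: X Y h1 h2 => ? ? [? ?] /= -> ->.
Qed.

Theorem proposition2p5 (R : realType) (A B C O F1 F2 : pt R) (a : R) :
  central_conic F1 F2 a ->
  nondegenerate_triangle A B C ->
  circumscribed A B C F1 F2 a ->
  is_circumcenter A B C O ->
  (dist O A) ^+ 2 = dist O F1 * dist O F2 ->
  is_hyperbola F1 F2 a.
Proof.
move=> [a0 hne] hnd [hAB hBC hCA] [hOA hOB] hR.
split; first by split.
rewrite ltNge; apply/negP => hle.
have hlt : dist F1 F2 < 2 * a by rewrite lt_neqAle eq_sym hne hle.
have [e ee] : exists e : pt R, e = pscale (1/2) (psub F1 F2) by eexists.
pose M := pscale (1/2) (padd F1 F2).
have E2ge : 0 <= dot e e := dot_ge0 e.
have [c cdef] : exists c : R, c = Num.sqrt (dot e e) by eexists.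
have hc2 : c^+2 = dot e e by rewrite cdef sqr_sqrtr.
have hd : dist F1 F2 ^+ 2 = 4 * dot e e.
  by rewrite dist_sq ee /dot /psub /pscale /=; field.
have dge : 0 <= dist F1 F2 := sqrtr_ge0 _.
have hcA : c^+2 < a^+2.
  rewrite hc2; have : dist F1 F2 ^+ 2 < (2*a)^+2.
    by rewrite ltr_pXn2r // ?nnegrE // mulr_ge0 // ltW.
  by rewrite hd => h; nra.
pose Bq := a^+2 - c^+2.
have B0 : 0 < Bq by rewrite subr_gt0.
have [u [hu he1 he2]] : exists u : R*R, [/\ u.1^+2+u.2^+2 = 1, e.1 = c*u.1 & e.2 = c*u.2].
  case: (eqVneq c 0) => hc0.
    exists (1,0).
    have s0 : e.1^+2 + e.2^+2 = c^+2 by rewrite hc2 /dot; ring.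
    rewrite hc0 (_ : (0:R)^+2 = 0) in s0; last by rewrite expr2 mul0r.
    move/eqP: s0; rewrite paddr_eq0 ?sqr_ge0 // !sqrf_eq0 => /andP [/eqP z1 /eqP z2].
    by split; [rewrite /= expr1n expr2 mul0r addr0 | rewrite z1 hc0 mul0r | rewrite z2 hc0 mul0r].
  exists (e.1/c, e.2/c); split => /=.
  - apply: (combine ((e.1^+2+e.2^+2 - c^+2)/c^+2)); first by field.
    by rewrite hc2 /dot; ring.
  - by field.
  - by field.
have he1' : (pscale (1/2) (psub F1 F2)).1 = c*u.1 by rewrite -ee.
have he2' : (pscale (1/2) (psub F1 F2)).2 = c*u.2 by rewrite -ee.
have [T1 [e1 p1A p1B]] := tang_rot hu he1' he2' hAB.
have [T2 [e2 p2B p2C]] := tang_rot hu he1' he2' hBC.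
have [T3 [e3 p3C p3A]] := tang_rot hu he1' he2' hCA.
set rA := rho u (psub A _) in p1A p3A.
set rB := rho u (psub B _) in p1B p2B.
set rC := rho u (psub C _) in p2C p3C.
pose rO := rho u (psub O M).
have hc : crs rA rB rC != 0.
  have -> : crs rA rB rC = (u.1^+2+u.2^+2) * cross (psub B A) (psub C A)
    by rewrite /crs /rA /rB /rC /rho /cross /psub /=; ring.
  by rewrite hu mul1r.
have d2E (X : pt R) : d2 rO (rho u (psub X M)) = dot (psub O X) (psub O X).
  apply: (combine ((u.1^+2+u.2^+2 - 1) * dot (psub O X) (psub O X))).
    by rewrite /d2 /rO /rho /dot /psub /=; ring.
  by rewrite hu subrr mul0r.
have oA : d2 rO rA = d2 rO rB by rewrite /rA /rB !d2E -!dist_sq hOA.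
have oB : d2 rO rB = d2 rO rC by rewrite /rB /rC !d2E -!dist_sq hOB.
have hid := coreT_gen a0 B0 e1 e2 e3 p1A p1B p2B p2C p3C p3A hc oA oB.
have f1 : dist O F1 ^+ 2 = (rO.1 - c)^+2 + rO.2^+2.
  by rewrite dist_sq -(focdist (psub O M) hu he1 he2) ee /M /dot /psub /padd /pscale /=; field.
have f2 : dist O F2 ^+ 2 = (rO.1 + c)^+2 + rO.2^+2.
  have h1 : (- e.1, - e.2).1 = (-c)*u.1 by rewrite /= he1 mulNr.
  have h2 : (- e.1, - e.2).2 = (-c)*u.2 by rewrite /= he2 mulNr.
  rewrite dist_sq (_ : (rO.1 + c) = (rO.1 - (-c))); last by rewrite opprK.
  by rewrite -(focdist (psub O M) hu h1 h2) ee /M /dot /psub /padd /pscale /=; field.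
have rA2 : dist O A ^+ 2 = d2 rO rA by rewrite /rA d2E dist_sq.
have R0 : 0 < d2 rO rA.
  rewrite lt_def /d2 addr_ge0 ?sqr_ge0 // andbT; apply/negP => /eqP hz.
  have zA := d2_eq0 hz.
  have zB : rO = rB by apply: d2_eq0; rewrite -oA.
  have zC : rO = rC by apply: d2_eq0; rewrite -oB -oA.
  by move: hc; rewrite -zA -zB -zC /crs !subrr ?mulr0 ?subrr eqxx.
set s1 := dist O F1 in hR f1.
set s2 := dist O F2 in hR f2.
have s10 : 0 <= s1 := sqrtr_ge0 _.
have s20 : 0 <= s2 := sqrtr_ge0 _.
move: hid; rewrite /ident => hid.
have key : (d2 rO rA - s1^+2) * (d2 rO rA - s2^+2) = 4 * d2 rO rA * Bq.
  by rewrite f1 f2 -hid /Bq; ring.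
have hRs : d2 rO rA = s1 * s2 by rewrite -rA2.
rewrite hRs in key R0.
have hp : 0 <= s1 * s2 * (s1 - s2)^+2 by rewrite mulr_ge0 ?sqr_ge0 ?mulr_ge0.
have hq : 0 < 4 * (s1 * s2) * Bq by rewrite mulr_gt0 // mulr_gt0.
have : (s1 * s2 - s1 ^+ 2) * (s1 * s2 - s2 ^+ 2) = - (s1 * s2 * (s1 - s2)^+2) by ring.
rewrite key => hh; move: hq; rewrite hh oppr_gt0 => hq.
by move: (le_lt_trans hp hq); rewrite ltxx.
Qed.
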